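(* Consider Algorithm NCB run with inputs $k\ge2$ and $T$ on an instance with $\mu^*\ge\frac{32\sqrt{k\log k\log T}}{\sqrt T}$. On the event $G$, every arm $i$ that is pulled at least once in Phase II satisfies $$\mu_i\ge\mu^*-8\sqrt{\frac{\mu^*\log T}{T_i-1}},$$ where $T_i$ is the total number of times arm $i$ is pulled during the whole run.
   Context: Bandit setup: $k$ arms, arm $i$ a distribution on $[0,1]$ with mean $\mu_i$, $\mu^*:=\max_i\mu_i$. $\log$ is the natural logarithm. Canonical model: a $k\times T$ table $(Y_{i,s})$ of independent entries with $Y_{i,s}$ distributed as arm $i$; the $s$-th pull of arm $i$ yields $Y_{i,s}$. Let $\widehat\mu_{i,s}:=\frac1s\sum_{r=1}^sY_{i,r}$. Algorithm NCB (inputs $k,T$): $\widetilde T:=16\sqrt{\frac{kT\log T}{\log k}}$. Phase I: in each round $t\le\widetilde T$ pull a uniformly random arm. Phase II: in each round $\widetilde T<t\le T$ pull an arm maximizing $\mathrm{NCB}_i:=\widehat\mu_i+4\sqrt{\widehat\mu_i\log T/n_i}$, where $n_i$ is the number of pulls of $i$ before the round and $\widehat\mu_i$ its empirical mean (ties arbitrary). Events: $G_1$: every arm is pulled at least $\frac{\widetilde T}{2k}$ times in Phase I. $G_2$: for every arm $i$ with $\mu_i>\frac{6\sqrt{k\log k\log T}}{\sqrt T}$ and every integer $s$ with $\frac{\widetilde T}{2k}\le s\le T$, $|\mu_i-\widehat\mu_{i,s}|\le 3\sqrt{\frac{\mu_i\log T}{s}}$. $G_3$: for every arm $j$ with $\mu_j\le\frac{6\sqrt{k\log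 k\log T}}{\sqrt T}$ and every integer $s$ with $\frac{\widetilde T}{2k}\le s\le T$, $\widehat\mu_{j,s}\le \frac{9\sqrt{k\log k\log T}}{\sqrt T}$. $G:=G_1\cap G_2\cap G_3$. *)

(* Defs.v *)
From HB Require Import structures.
From mathcomp Require Import all_boot all_order all_algebra.
From mathcomp Require Import reals exp.
Set Implicit Arguments. Unset Strict Implicit. Unset Printing Implicit Defensive.
Import Order.TTheory GRing.Theory Num.Theory.
Local Open Scope ring_scope.

Section NCB.
Variables (R : realType) (k T : nat).

Definition Ttil : R :=
  16 * Num.sqrt (k%:R * T%:R * ln (T%:R) / ln (k%:R)).

(* mu^* = max_i mu_i (the mu_i are in [0,1], so 0 is a neutral seed) *)
Definition mustar (mu : 'I_k -> R) : R := \big[Num.max/0]_(i < k) mu i.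

(* empirical mean of the first s entries Y_{i,1..s} of row i *)
Definition muhat (Y : 'I_k -> nat -> R) (i : 'I_k) (s : nat) : R :=
  (\sum_(1 <= r < s.+1) Y i r) / s%:R.

(* a t = arm pulled in round t (rounds 1..T).  number of pulls of i
   strictly before round t *)
Definition npulls (a : nat -> 'I_k) (i : 'I_k) (t : nat) : nat :=
  count (fun u => a u == i) (iota 1 t.-1).

Definition Ttot (a : nat -> 'I_k) (i : 'I_k) : nat := npulls a i T.+1.

Definition phase1_pulls (a : nat -> 'I_k) (i : 'I_k) : nat :=
  count (fun t => (t%:R <= Ttil) && (a t == i)) (iota 1 T).

Definition NCB (Y : 'I_k -> nat -> R) (a : nat -> 'I_k) (i : 'I_k) (t : nat) : R :=
  let n := npulls a i t in
  muhat Y i n + 4 * Num.sqrt (muhat Y i n * ln (T%:R) / n%:R).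

(* the run a follows Algorithm NCB in Phase II (Phase I choices are arbitrary:
   the statement is pathwise on G; ties arbitrary) *)
Definition follows_NCB (Y : 'I_k -> nat -> R) (a : nat -> 'I_k) : Prop :=
  forall t : nat, (1 <= t <= T)%N -> Ttil < t%:R ->
    forall j : 'I_k, NCB Y a j t <= NCB Y a (a t) t.

Definition small_thr : R :=
  6 * Num.sqrt (k%:R * ln (k%:R) * ln (T%:R)) / Num.sqrt (T%:R).

Definition G1 (a : nat -> 'I_k) : Prop :=
  forall i : 'I_k, Ttil / (2 * k%:R) <= (phase1_pulls a i)%:R.

Definition G2 (mu : 'I_k -> R) (Y : 'I_k -> nat -> R) : Prop :=
  forall i : 'I_k, small_thr < mu i ->
    forall s : nat, Ttil / (2 * k%:R) <= s%:R -> (s <= T)%N ->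
      `|mu i - muhat Y i s| <= 3 * Num.sqrt (mu i * ln (T%:R) / s%:R).

Definition G3 (mu : 'I_k -> R) (Y : 'I_k -> nat -> R) : Prop :=
  forall j : 'I_k, mu j <= small_thr ->
    forall s : nat, Ttil / (2 * k%:R) <= s%:R -> (s <= T)%N ->
      muhat Y j s <= 9 * Num.sqrt (k%:R * ln (k%:R) * ln (T%:R)) / Num.sqrt (T%:R).

Definition eventG mu Y a : Prop := G1 a /\ G2 mu Y /\ G3 mu Y.

End NCB.

(* Main.v *)
Require Import Defs.
From HB Require Import structures.
From mathcomp Require Import all_boot all_order all_algebra.
From mathcomp Require Import reals exp ring lra zify.
Import Order.TTheory GRing.Theory Num.Theory.
Local Open Scope ring_scope.

Lemma sqrt_split (R : realType) (x L n : R) : 0 <= x ->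
  Num.sqrt (x * L / n) = Num.sqrt x * Num.sqrt (L / n).
Proof. by move=> hx; rewrite -mulrA sqrtrM. Qed.

Lemma core (R : realType) (m q L ni ns muhi muhs mui : R) :
  0 < q -> 32 * q <= m -> 0 < L -> 0 < ni -> 0 < ns ->
  8 * L <= ni * q -> 8 * L <= ns * q ->
  0 <= muhi -> 0 <= muhs -> 0 <= mui ->
  muhs + 4 * Num.sqrt (muhs * L / ns) <= muhi + 4 * Num.sqrt (muhi * L / ni) ->
  `|m - muhs| <= 3 * Num.sqrt (m * L / ns) ->
  ((muhi <= 9 * q) \/ (`|mui - muhi| <= 3 * Num.sqrt (mui * L / ni))) ->
  m - 8 * Num.sqrt (m * L / ni) <= mui.
Proof.
move=> q0 qm L0 ni0 ns0 hni hns hhi hhs hmi hncb hst hcase.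
have m0 : 0 <= m by lra.
rewrite !sqrt_split // in hncb hst hcase *.
set u := Num.sqrt (L / ni) in hncb hcase *.
set v := Num.sqrt (L / ns) in hncb hst.
set s := Num.sqrt m in hst *.
have u0 : 0 <= u by apply: sqrtr_ge0.
have v0 : 0 <= v by apply: sqrtr_ge0.
have s0 : 0 <= s by apply: sqrtr_ge0.
have us : u ^+ 2 = L / ni by rewrite sqr_sqrtr // divr_ge0 // ltW.
have vs : v ^+ 2 = L / ns by rewrite sqr_sqrtr // divr_ge0 // ltW.
have ss : s ^+ 2 = m by rewrite sqr_sqrtr.
have uq : u ^+ 2 * 8 <= q.
  by rewrite us -(ler_pM2r ni0) mulrAC mulfVK ?gt_eqF //; lra.
have vq : v ^+ 2 * 8 <= q.
  by rewrite vs -(ler_pM2r ns0) mulrAC mulfVK ?gt_eqF //; lra.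
have su : 16 * u <= s by nra.
have sv : 16 * v <= s by nra.
set y := Num.sqrt muhi in hncb hcase.
set z := Num.sqrt muhs in hncb.
have y0 : 0 <= y by apply: sqrtr_ge0.
have z0 : 0 <= z by apply: sqrtr_ge0.
have ys : y ^+ 2 = muhi by rewrite sqr_sqrtr.
have zs : z ^+ 2 = muhs by rewrite sqr_sqrtr.
move/ler_normlP: hst => [hst1 hst2].
have z2 : s ^+ 2 - 3 * s * v <= z ^+ 2 by lra.
have zb : s - 2 * v <= z by nra.
have hm : s ^+ 2 <= y ^+ 2 + 4 * y * u by nra.
case: hcase => [hsm | hlg].
  have yb : y ^+ 2 <= 9 * q by lra.
  have yu : y * u * 10 <= 11 * q by nra.
  nra.
set x := Num.sqrt mui in hlg *.
have x0 : 0 <= x by apply: sqrtr_ge0.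
have xs : x ^+ 2 = mui by rewrite sqr_sqrtr.
move/ler_normlP: hlg => [h1 h2].
have hy : y ^+ 2 <= x ^+ 2 + 3 * x * u by lra.
have hyb : y * 2 <= x * 2 + 3 * u by nra.
case: (lerP s x) => hsx.
  nra.
nra.
Qed.
Lemma phase1_le (R : realType) k T (a : nat -> 'I_k) j t :
  (1 <= t <= T)%N -> Ttil R k T < t%:R ->
  (phase1_pulls R T a j <= npulls a j t)%N.
Proof.
move=> /andP[t1 tT] ht; rewrite /phase1_pulls /npulls.
have E : iota 1 T = iota 1 t.-1 ++ iota (1 + t.-1) (T - t.-1).
  by rewrite -iotaD subnKC // (leq_trans (leq_pred t)).
rewrite E count_cat.
have -> : count (fun t0 : nat => (t0%:R <= Ttil R k T) && (a t0 == j))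
    (iota (1 + t.-1) (T - t.-1)) = 0%N.
  apply/eqP; rewrite -leqn0 leqn0 eqn0Ngt -has_count; apply/hasPn => u.
  rewrite mem_iota => /andP[hu _]; apply/negP => /andP[hu2 _].
  have : t%:R <= u%:R :> R by rewrite ler_nat; move: hu; rewrite add1n prednK.
  lra.
rewrite addn0; apply: sub_count => u /andP[].
by [].
Qed.

Lemma npulls_le k (a : nat -> 'I_k) j t : (npulls a j t <= t.-1)%N.
Proof. by rewrite /npulls (leq_trans (count_size _ _)) // size_iota. Qed.

Lemma last_round (R : realType) k T (a : nat -> 'I_k) i :
  (exists t : nat, [/\ (1 <= t <= T)%N, Ttil R k T < t%:R & a t = i]) ->
  exists t, [/\ (1 <= t <= T)%N, Ttil R k T < t%:R, a t = i &
     Ttot T a i = (npulls a i t).+1].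
Proof.
move=> ex.
pose P := fun t : nat => [&& (1 <= t)%N, (t <= T)%N, (Ttil R k T < t%:R) & a t == i].
have exP : exists t, P t.
  by case: ex => t [/andP[h1 h2] h3 h4]; exists t; rewrite /P h1 h2 h3 h4 eqxx.
have ubP : forall t, P t -> (t <= T)%N by move=> t /and4P[].
case: (ex_maxnP exP ubP) => t /and4P[t1 tT ht /eqP at_] tmax.
exists t; split => //; first by rewrite t1 tT.
rewrite /Ttot /npulls /=.
have E : iota 1 T = iota 1 t.-1 ++ t :: iota t.+1 (T - t).
  have eT : T = (t.-1 + (T - t).+1)%N by lia.
  by rewrite {1}eT iotaD add1n prednK.
rewrite E count_cat /= at_ eqxx.
have -> : count (fun u => a u == i) (iota t.+1 (T - t)) = 0%N.
  apply/eqP; rewrite eqn0Ngt -has_count; apply/hasPn => u.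
  rewrite mem_iota => /andP[hu hu2]; apply/negP => /eqP au.
  have : P u.
    rewrite /P au eqxx andbT (leq_trans t1 (ltnW hu)) /=.
    rewrite -ltnS (leq_trans hu2) /=; last by lia.
    by rewrite (lt_le_trans ht) // ler_nat ltnW.
  by move/tmax; rewrite leqNgt hu.
by rewrite addn0 addnS addn0.
Qed.

Lemma mustar_ex (R : realType) k (mu : 'I_k -> R) :
  mustar mu = 0 \/ exists i, mustar mu = mu i.
Proof.
rewrite /mustar; apply: (big_ind (fun x => x = 0 \/ exists i, x = mu i)).
- by left.
- move=> x y hx hy; rewrite /Num.max; case: ifP => _; by [].
- by move=> j _; right; exists j.
Qed.

Lemma key_bound (R : realType) (k T : nat) (n : R) :
  (2 <= k)%N -> (2 <= T)%N -> Ttil R k T / (2 * k%:R) <= n ->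
  8 * ln (T%:R : R) <= n * (Num.sqrt (k%:R * ln (k%:R) * ln (T%:R)) / Num.sqrt (T%:R)).
Proof.
move=> hk hT hn.
have lk : 0 < ln (k%:R : R) by apply: ln_gt0; rewrite ltr1n.
have lT : 0 < ln (T%:R : R) by apply: ln_gt0; rewrite ltr1n.
have k0 : 0 < (k%:R : R) by rewrite ltr0n; lia.
have T0 : 0 < (T%:R : R) by rewrite ltr0n; lia.
set L := ln (T%:R : R) in lT hn *.
set l := ln (k%:R : R) in lk hn *.
move: hn; rewrite /Ttil.
set A := Num.sqrt _.
set B := Num.sqrt _.
set C := Num.sqrt _.
move=> hn.
have A0 : 0 <= A by apply: sqrtr_ge0.
have B0 : 0 <= B by apply: sqrtr_ge0.
have C0 : 0 < C by rewrite sqrtr_gt0.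
have As : A ^+ 2 = k%:R * T%:R * L / l.
  by rewrite sqr_sqrtr // divr_ge0 // ?mulr_ge0 // ltW.
have Bs : B ^+ 2 = k%:R * l * L by rewrite sqr_sqrtr // !mulr_ge0 // ltW.
have Cs : C ^+ 2 = T%:R by rewrite sqr_sqrtr // ltW.
have AB2 : (A * B) ^+ 2 = (k%:R * L * C) ^+ 2.
  rewrite exprMn As Bs !exprMn Cs; field; lra.
have AB : k%:R * L * C <= A * B.
  have h0 : 0 <= k%:R * L * C by rewrite !mulr_ge0 // ltW.
  have h1 : 0 <= A * B by rewrite mulr_ge0.
  nra.
have e : 16 * A / (2 * k%:R) * (B / C) = 8 * (A * B) / (k%:R * C).
  field; lra.
have : 8 * L <= 16 * A / (2 * k%:R) * (B / C).
  rewrite e ler_pdivlMr ?mulr_gt0 //; nra.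
move=> h; apply: (le_trans h); rewrite ler_pM2r // divr_gt0 //.
rewrite lt_neqAle sqrtr_ge0 andbT eq_sym.
apply/negP => /eqP B0'. move: Bs; rewrite B0' expr0n /= => /esym/eqP.
rewrite !mulf_eq0 !gt_eqF //.
Qed.
Lemma muhat_ge0 (R : realType) k (Y : 'I_k -> nat -> R) i s :
  (forall i s, 0 <= Y i s <= 1) -> 0 <= muhat Y i s.
Proof.
move=> hY; rewrite /muhat divr_ge0 //; apply: sumr_ge0 => r _.
by case/andP: (hY i r).
Qed.

Theorem lemma4 (R : realType) (k T : nat) (mu : 'I_k -> R)
    (Y : 'I_k -> nat -> R) (a : nat -> 'I_k) :
  (2 <= k)%N -> (2 <= T)%N ->
  (forall i, 0 <= mu i <= 1) ->
  (forall i s, 0 <= Y i s <= 1) ->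
  32 * Num.sqrt (k%:R * ln (k%:R) * ln (T%:R)) / Num.sqrt (T%:R) <= mustar mu ->
  follows_NCB T Y a ->
  eventG T mu Y a ->
  forall i : 'I_k,
    (exists t : nat, [/\ (1 <= t <= T)%N, Ttil R k T < t%:R & a t = i]) ->
    mustar mu - 8 * Num.sqrt (mustar mu * ln (T%:R) / ((Ttot T a i)%:R - 1))
      <= mu i.
Proof.
move=> hk hT hmu hY hm hf [g1 [g2 g3]] i hex.
case: (@last_round R k T a i hex) => t [ht1 ht2 ati hTt].
have e : ((npulls a i t).+1)%:R - 1 = (npulls a i t)%:R :> R by rewrite -natr1 addrK.
rewrite hTt e.
have lk : 0 < ln (k%:R : R) by apply: ln_gt0; rewrite ltr1n.
have lT : 0 < ln (T%:R : R) by apply: ln_gt0; rewrite ltr1n.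
have k0 : 0 < (k%:R : R) by rewrite ltr0n; lia.
have T0 : 0 < (T%:R : R) by rewrite ltr0n; lia.
pose q : R := Num.sqrt (k%:R * ln (k%:R) * ln (T%:R)) / Num.sqrt (T%:R).
have q0 : 0 < q.
  by rewrite divr_gt0 // sqrtr_gt0 // !mulr_gt0.
have Tt0 : 0 < Ttil R k T / (2 * k%:R).
  by rewrite divr_gt0 ?mulr_gt0 // /Ttil sqrtr_gt0 divr_gt0 // !mulr_gt0.
have hn : forall j, Ttil R k T / (2 * k%:R) <= (npulls a j t)%:R.
  move=> j; apply: (le_trans (g1 j)); rewrite ler_nat; exact: phase1_le.
have hnT : forall j, (npulls a j t <= T)%N.
  move=> j; apply: (leq_trans (@npulls_le k a j t)); case/andP: ht1 => _ h.
  exact: leq_trans (leq_pred t) h.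
have hq : 32 * q <= mustar mu by rewrite /q mulrA.
case: (@mustar_ex R k mu) => [m0 | [s hs]].
  by move: hm; rewrite m0 -mulrA; lra.
have sthr : small_thr R k T = 6 * q by rewrite /small_thr /q mulrA.
have G3b : 9 * Num.sqrt (k%:R * ln (k%:R) * ln (T%:R)) / Num.sqrt (T%:R) = 9 * q.
  by rewrite /q mulrA.
have hNCB := hf t ht1 ht2 s.
rewrite /NCB ati in hNCB.
apply: (@core R _ _ _ _ _ _ _ _ q0 hq lT _ _ (@key_bound R k T _ hk hT (hn i)) (@key_bound R k T _ hk hT (hn s))
          (@muhat_ge0 R k Y _ _ hY) (@muhat_ge0 R k Y _ _ hY) _ hNCB).
- exact: lt_le_trans Tt0 (hn i).
- exact: lt_le_trans Tt0 (hn s).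
- by case/andP: (hmu i).
- rewrite hs; apply: g2; [by rewrite -hs sthr; lra | exact: hn | exact: hnT].
- case: (lerP (mu i) (small_thr R k T)) => hsm.
    by left; rewrite -G3b; apply: g3; [exact: hsm | exact: hn | exact: hnT].
  by right; apply: g2; [exact: hsm | exact: hn | exact: hnT].
Qed.
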